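(* Consider an MPI computation in which every call by an MPI rank to a collective communication function is replaced by the two-phase wrapper (Phase 1: a call to MPI\_Barrier() on the same ranks, the ''trivial barrier''; Phase 2: the original collective communication call), and in which checkpointing is governed by the two-phase checkpoint protocol described in the context. Then an MPI rank is never inside a collective communication call (Phase 2 of the wrapper) when a do-ckpt (checkpoint) message is received from the checkpoint coordinator.
   Context: Setting: a set of MPI ranks (processes) running concurrently, plus a separate checkpoint coordinator process that exchanges messages with each rank (each rank has a helper thread that receives and answers coordinator messages asynchronously). Events are ordered by Lamport's happens-before relation. Barrier axiom: for a given invocation of an MPI barrier, it never happens that a rank A exits the barrier before (under happens-before) another participating rank B enters that barrier. Two-phase wrapper: whenever the application invokes an MPI collective communication function, it instead executes a wrapper which first calls MPI\_Barrier() over the participating ranks (the ''trivial barrier'', Phase 1) and then calls the original collective communication function (Phase 2). A rank is ''inCollectiveWrapper'' while executing this wrapper. Checkpoint protocol. Messages: intend-to-ckpt, extra-iteration, do-ckpt. Rank states reported: ready, in-phase-1, exit-phase-2. Coordinator: send intend-to-ckpt to all ranks and receive a response from each rank; while some rank responded with state exit-phase-2, send extra-iteration to all ranks and receive a response from each rank; then send do-ckpt to all ranks. Rank, on receiving intend-to-ckpt or extra-iteration: if not in a collective wrapper, reply ''ready''; if in a collective wrapper and in Phase 1, reply ''in-phase-1''; if in a collective wrapper and in Phase 2, first finish executing the collective communication call, then reply ''exit-phase-2'' and set its state to ready. In all cases the rank then continues executing but waits (blocks) before its next collective communication call (i.e., before entering Phase 2 of any wrapper). Rank, on receiving do-ckpt: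 perform its local checkpoint; then, if it is waiting before a collective communication call, unblock and continue executing. *)

(* Defs.v *)
From mathcomp Require Import all_boot.
Set Implicit Arguments. Unset Strict Implicit. Unset Printing Implicit Defensive.

Inductive cmsg := IntendCkpt | ExtraIteration | DoCkpt.
(* Rank states reported in replies rank -> coordinator. *)
Inductive rstate := Ready | InPhase1 | ExitPhase2.

(* Position of a rank w.r.t. the two-phase collective wrapper.
   [Phase1 false]: inside the trivial barrier (entered, not yet exited);
   [Phase1 true]: barrier exited, Phase 2 (the collective) not yet called;
   [Phase2]: inside the original collective communication call. *)
Inductive wphase := Outside | Phase1 of bool | Phase2.

Record rank_st := RankSt {
  pc : nat;          (* index of the current/next collective invocation *)
  ph : wphase;
  blocked : bool;    (* must wait before its next collective call (Phase 2) *)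
  pending : bool     (* received intend/extra while in Phase 2: reply owed *)
}.

Record sys (R : finType) := Sys {
  rk : R -> rank_st;
  inbox : R -> seq cmsg;
  outbox : R -> seq rstate;
  collecting : bool;          (* coordinator is in a round, awaiting replies *)
  resp : R -> option rstate
}.

Definition upd (R : finType) (A : Type) (f : R -> A) (r : R) (x : A) : R -> A :=
  fun r' => if r' == r then x else f r'.

Inductive label (R : finType) :=
| LEnter of R
| LBarrierExit of R
| LEnterP2 of R
| LExitP2 of R
| LRecv of R & cmsg
| LStartCkpt
| LCollect of R
| LDecide.
Arguments LStartCkpt {R}.
Arguments LDecide {R}.

Section Model.
Variables (R : finType) (Coll : Type).
(* prog r k : the k-th collective invocation executed by rank r;
   part c  : the ranks participating in invocation c. *)
Variables (prog : R -> nat -> Coll) (part : Coll -> {set R}).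

Definition entered (s : sys R) (r' : R) (c : Coll) : Prop :=
  exists k, prog r' k = c /\
    (k < pc (rk s r') \/ (k = pc (rk s r') /\ ph (rk s r') <> Outside)).

Definition set_rank (s : sys R) (r : R) (x : rank_st) : sys R :=
  Sys (upd (rk s) r x) (inbox s) (outbox s) (collecting s) (resp s).

Definition reply (s : sys R) (r : R) (x : rank_st) (a : rstate) (rest : seq cmsg)
  : sys R :=
  Sys (upd (rk s) r x) (upd (inbox s) r rest)
      (upd (outbox s) r (rcons (outbox s r) a)) (collecting s) (resp s).

Definition bcast (s : sys R) (m : cmsg) : R -> seq cmsg :=
  fun r => rcons (inbox s r) m.

Inductive step : sys R -> label R -> sys R -> Prop :=
| StEnter s r :
    ph (rk s r) = Outside ->
    step s (LEnter r)
      (set_rank s r (RankSt (pc (rk s r)) (Phase1 false) (blocked (rk s r)) (pending (rk s r))))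
| StBarrierExit s r :
    ph (rk s r) = Phase1 false ->
    (forall r', r' \in part (prog r (pc (rk s r))) -> entered s r' (prog r (pc (rk s r)))) ->
    step s (LBarrierExit r)
      (set_rank s r (RankSt (pc (rk s r)) (Phase1 true) (blocked (rk s r)) (pending (rk s r))))
| StEnterP2 s r :
    ph (rk s r) = Phase1 true ->
    blocked (rk s r) = false ->
    step s (LEnterP2 r)
      (set_rank s r (RankSt (pc (rk s r)) Phase2 (blocked (rk s r)) (pending (rk s r))))
| StExitP2 s r :
    ph (rk s r) = Phase2 ->
    pending (rk s r) = false ->
    step s (LExitP2 r)
      (set_rank s r (RankSt (pc (rk s r)).+1 Outside (blocked (rk s r)) false))
| StExitP2Reply s r :
    ph (rk s r) = Phase2 ->
    pending (rk s r) = true ->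
    step s (LExitP2 r)
      (Sys (upd (rk s) r (RankSt (pc (rk s r)).+1 Outside true false))
           (inbox s) (upd (outbox s) r (rcons (outbox s r) ExitPhase2))
           (collecting s) (resp s))
| StRecvQueryOut s r m rest :
    inbox s r = m :: rest -> m <> DoCkpt ->
    ph (rk s r) = Outside ->
    step s (LRecv r m)
      (reply s r (RankSt (pc (rk s r)) Outside true (pending (rk s r))) Ready rest)
| StRecvQueryP1 s r m rest b :
    inbox s r = m :: rest -> m <> DoCkpt ->
    ph (rk s r) = Phase1 b ->
    step s (LRecv r m)
      (reply s r (RankSt (pc (rk s r)) (Phase1 b) true (pending (rk s r))) InPhase1 rest)
| StRecvQueryP2 s r m rest :
    inbox s r = m :: rest -> m <> DoCkpt ->
    ph (rk s r) = Phase2 ->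
    step s (LRecv r m)
      (Sys (upd (rk s) r (RankSt (pc (rk s r)) Phase2 (blocked (rk s r)) true))
           (upd (inbox s) r rest) (outbox s) (collecting s) (resp s))
| StRecvDo s r rest :
    inbox s r = DoCkpt :: rest ->
    (* local checkpoint, then unblock *)
    step s (LRecv r DoCkpt)
      (Sys (upd (rk s) r (RankSt (pc (rk s r)) (ph (rk s r)) false (pending (rk s r))))
           (upd (inbox s) r rest) (outbox s) (collecting s) (resp s))
| StStart s :
    collecting s = false ->
    step s LStartCkpt
      (Sys (rk s) (bcast s IntendCkpt) (outbox s) true (fun _ => None))
| StCollect s r a rest :
    collecting s = true -> outbox s r = a :: rest -> resp s r = None ->
    step s (LCollect r)
      (Sys (rk s) (inbox s) (upd (outbox s) r rest) true (upd (resp s) r (Some a)))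
| StDecideExtra s :
    collecting s = true -> (forall r, resp s r <> None) ->
    (exists r, resp s r = Some ExitPhase2) ->
    step s LDecide
      (Sys (rk s) (bcast s ExtraIteration) (outbox s) true (fun _ => None))
| StDecideDo s :
    collecting s = true -> (forall r, resp s r <> None) ->
    (forall r, resp s r <> Some ExitPhase2) ->
    step s LDecide
      (Sys (rk s) (bcast s DoCkpt) (outbox s) false (fun _ => None)).

Definition init : sys R :=
  Sys (fun _ => RankSt 0 Outside false false) (fun _ => [::]) (fun _ => [::])
      false (fun _ => None).

Inductive reachable : sys R -> Prop :=
| ReachInit : reachable init
| ReachStep s l s' : reachable s -> step s l s' -> reachable s'.

End Model.

(* Main.v *)
Require Import Defs.
From mathcomp Require Import all_boot.

Set Implicit Arguments.
Section Proof.
Variables (R : finType) (Coll : Type) (prog : R -> nat -> Coll)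
    (part : Coll -> {set R}).

Definition rinv (s : sys R) (r : R) : Prop :=
 (ph (rk s r) = Phase2 -> blocked (rk s r) = false) /\
 if collecting s then
  (resp s r = None /\ outbox s r = [::] /\ pending (rk s r) = false /\
     exists q, q <> DoCkpt /\ inbox s r = [:: q])
  \/ (resp s r = None /\ outbox s r = [::] /\ pending (rk s r) = false /\
     blocked (rk s r) = true /\ exists q, q <> DoCkpt /\ inbox s r = [:: DoCkpt; q])
  \/ (resp s r = None /\ outbox s r = [::] /\ inbox s r = [::] /\
      ph (rk s r) = Phase2 /\ pending (rk s r) = true)
  \/ (resp s r = None /\ inbox s r = [::] /\ pending (rk s r) = false /\
      exists a, outbox s r = [:: a] /\ (a <> ExitPhase2 -> blocked (rk s r) = true))
  \/ (inbox s r = [::] /\ outbox s r = [::] /\ pending (rk s r) = false /\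
      exists a, resp s r = Some a /\ (a <> ExitPhase2 -> blocked (rk s r) = true))
 else
  outbox s r = [::] /\ pending (rk s r) = false /\
  (inbox s r = [::] \/ (inbox s r = [:: DoCkpt] /\ blocked (rk s r) = true)).

Definition Inv s := forall r, rinv s r.

Lemma inv_init : Inv (init R).
Proof. by move=> r; split => //=; do 2 split => //; left. Qed.

Ltac dH H :=
  case: H => [[R1 [O1 [P1 [q [Q1 I1]]]]]|[[R2 [O2 [P2 [B2 [q [Q2 I2]]]]]]|[[R3 [O3 [I3 [Ph3 P3]]]]|[[R4 [I4 [P4 [a [O4 B4]]]]]|[I5 [O5 [P5 [a [R5 B5]]]]]]]]].
Ltac dI H := case: H => [O [P [E|[E B]]]].
Ltac g1 q := left; (repeat apply: conj); [..| exists q; split]; try done.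
Ltac g2 q := right; left; (repeat apply: conj); [..| exists q; split]; try done.
Ltac g3 := do 2 right; left; (repeat apply: conj); try done.
Ltac g4 a := do 3 right; left; (repeat apply: conj); [..| exists a; split]; try done.
Ltac g5 a := do 4 right; (repeat apply: conj); [..| exists a; split]; try done.

Lemma inv_step s l s' : Inv s -> step prog part s l s' -> Inv s'.
Proof.
move=> I st; case: st I.
- move=> {}s r Hph I r'; rewrite /rinv /= /upd; case: eqP => [->{r'}|ne]; last exact: I r'.
  have [Hp H] := I r; split; first by [].
  move: H; rewrite /=; case: (collecting s) => H.
  + dH H; [g1 q|g2 q|by rewrite Hph in Ph3|g4 a|g5 a].
  + by [].
- move=> {}s r Hph _ I r'; rewrite /rinv /= /upd; case: eqP => [->{r'}|ne]; last exact: I r'.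
  have [Hp H] := I r; split; first by [].
  move: H; rewrite /=; case: (collecting s) => H.
  + dH H; [g1 q|g2 q|by rewrite Hph in Ph3|g4 a|g5 a].
  + by [].
- move=> {}s r Hph Hb I r'; rewrite /rinv /= /upd; case: eqP => [->{r'}|ne]; last exact: I r'.
  have [Hp H] := I r; split; first by [].
  move: H; rewrite /=; case: (collecting s) => H.
  + dH H; [g1 q|g2 q|by rewrite Hph in Ph3|g4 a|g5 a].
  + by [].
- move=> {}s r Hph Hpe I r'; rewrite /rinv /= /upd; case: eqP => [->{r'}|ne]; last exact: I r'.
  have [Hp H] := I r; split; first by [].
  move: H; rewrite /=; case: (collecting s) => H.
  + dH H; [g1 q|g2 q|by rewrite Hpe in P3|g4 a|g5 a].
  + by case: H => ? [_ ?]; split.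
- move=> {}s r Hph Hpe I r'; rewrite /rinv /= /upd; case: eqP => [->{r'}|ne]; last exact: I r'.
  have [Hp H] := I r; split; first by [].
  move: H; rewrite /=; case: (collecting s) => H.
  + dH H; [by rewrite Hpe in P1|by rewrite Hpe in P2|g4 ExitPhase2; by rewrite O3|by rewrite Hpe in P4|by rewrite Hpe in P5].
  + by case: H => _ [H _]; rewrite Hpe in H.
- move=> {}s r m rest Hin Hm Hph I r'; rewrite /rinv /reply /= /upd; case: eqP => [->{r'}|ne]; last exact: I r'.
  have [Hp H] := I r; split; first by [].
  move: H; rewrite /=; case: (collecting s) => H.
  + dH H; rewrite ?I2 ?I3 ?I4 ?I5 in Hin => //.
    * rewrite I1 in Hin; case: Hin => _ <-; g4 Ready; by rewrite O1.
    * by case: Hin => E; rewrite E in Hm.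
  + dI H; rewrite E in Hin => //; by case: Hin => E'; rewrite E' in Hm.
- move=> {}s r m rest b Hin Hm Hph I r'; rewrite /rinv /reply /= /upd; case: eqP => [->{r'}|ne]; last exact: I r'.
  have [Hp H] := I r; split; first by [].
  move: H; rewrite /=; case: (collecting s) => H.
  + dH H; rewrite ?I2 ?I3 ?I4 ?I5 in Hin => //.
    * rewrite I1 in Hin; case: Hin => _ <-; g4 InPhase1; by rewrite O1.
    * by case: Hin => E; rewrite E in Hm.
  + dI H; rewrite E in Hin => //; by case: Hin => E'; rewrite E' in Hm.
- move=> {}s r m rest Hin Hm Hph I r'; rewrite /rinv /= /upd; case: eqP => [->{r'}|ne]; last exact: I r'.
  have [Hp H] := I r; split; first by move=> _; apply: Hp.
  move: H; rewrite /=; case: (collecting s) => H.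
  + dH H; rewrite ?I2 ?I3 ?I4 ?I5 in Hin => //.
    * rewrite I1 in Hin; case: Hin => _ <-; g3.
    * by case: Hin => E; rewrite E in Hm.
  + dI H; rewrite E in Hin => //; by case: Hin => E'; rewrite E' in Hm.
- move=> {}s r rest Hin I r'; rewrite /rinv /= /upd; case: eqP => [->{r'}|ne]; last exact: I r'.
  have [Hp H] := I r; split; first by [].
  move: H; rewrite /=; case: (collecting s) => H.
  + dH H; rewrite ?I3 ?I4 ?I5 in Hin => //.
    * by rewrite I1 in Hin; case: Hin => E; rewrite E in Q1.
    * rewrite I2 in Hin; case: Hin => <-; g1 q.
  + dI H; rewrite E in Hin => //; case: Hin => <-; split => //; split => //; by left.
- move=> {}s Hc I r'; rewrite /rinv /bcast /=.
  have [Hp H] := I r'; split; first by [].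
  move: H; rewrite Hc => H; dI H; rewrite E /=; [g1 IntendCkpt|g2 IntendCkpt].
- move=> {}s r a0 rest Hc Ho Hr I r'; rewrite /rinv /= /upd; case: eqP => [->{r'}|ne]; last by move: (I r'); rewrite /rinv Hc.
  have [Hp H] := I r; split; first by [].
  move: H; rewrite /= Hc => H.
  dH H; rewrite ?O1 ?O2 ?O3 ?O5 in Ho => //.
  + rewrite O4 in Ho; case: Ho => <- <-; g5 a.
- move=> {}s Hc Hall Hex I r'; rewrite /rinv /bcast /=.
  have [Hp H] := I r'; split; first by [].
  move: H; rewrite Hc => H; dH H; try by case: (Hall r').
  rewrite I5; g1 ExtraIteration.
- move=> {}s Hc Hall Hno I r'; rewrite /rinv /bcast /=.
  have [Hp H] := I r'; split; first by [].
  move: H; rewrite Hc => H; dH H; try by case: (Hall r').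
  rewrite I5; split => //; split => //; right; split => //.
  apply: B5 => E; apply: (Hno r'); by rewrite R5 E.
Qed.

End Proof.

Theorem theorem1 (R : finType) (Coll : Type) (prog : R -> nat -> Coll)
    (part : Coll -> {set R}) (s s' : sys R) (r : R) :
  reachable prog part s ->
  step prog part s (LRecv r DoCkpt) s' ->
  ph (rk s r) <> Phase2.
Proof.
move=> rs st.
have I : Inv s.
  elim: rs => [|s0 l s1 _ IH st0]; first exact: inv_init.
  exact: inv_step IH st0.
inversion st; subst => //.
have [Hp H] := I r.
case: (collecting s) H.
- case=> [[_ [_ [_ [q [Q E]]]]]|[[_ [_ [_ [B _]]]]|[[_ [_ [E _]]]|[[_ [E _]]|[E _]]]]].
  + by rewrite E in H1; case: H1 => /Q.
  + by move=> P; move: (Hp P); rewrite B.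
  + by rewrite E in H1.
  + by rewrite E in H1.
  + by rewrite E in H1.
- case=> _ [_ [E|[_ B]]]; first by rewrite E in H1.
  by move=> P; move: (Hp P); rewrite B.
Qed.
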